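(* On $\mathcal{P}(\mathbb{R}^{2m},\mathbb{C})\cap\ker(\Delta_x,\Delta_u)$, $$AC=\frac{H_x+H_xH_u+H_u}{(H_x+1)(H_u+1)}\,CA-(H_x+H_u)+\frac{S_xS_u}{H_x+1}+\frac{S_uS_x}{H_u+1}.$$
   Context: Fix an integer $m>4$. For $x,u\in\mathbb{R}^m$ let $\mathcal{P}(\mathbb{R}^{2m},\mathbb{C})$ be complex polynomials in $(x,u)$, $\mathcal{P}_{p,q}$ those of bidegree $(p,q)$. Write $|x|^2=\sum x_j^2$, $\langle u,x\rangle=\sum u_jx_j$, $\Delta_x=\sum\partial_{x_j}^2$, $\Delta_u=\sum\partial_{u_j}^2$, $\langle\partial_u,\partial_x\rangle=\sum\partial_{u_j}\partial_{x_j}$, $\langle x,\partial_u\rangle=\sum x_j\partial_{u_j}$, $\langle u,\partial_x\rangle=\sum u_j\partial_{x_j}$, $\mathbb{E}_x=\sum x_j\partial_{x_j}$, $\mathbb{E}_u=\sum u_j\partial_{u_j}$, $H_x=-(\mathbb{E}_x+\frac m2)$, $H_u=-(\mathbb{E}_u+\frac m2)$, $\ker(D_1,\dots,D_r)=\bigcap\ker D_i$. Every $P\in\mathcal{P}_{p,q}$ is uniquely $\sum_{a,b\ge0}|x|^{2a}|u|^{2b}H'_{p-2a,q-2b}$ with $H'_{p-2a,q-2b}\in\mathcal{P}_{p-2a,q-2b}\cap\ker(\Delta_x,\Delta_u)$; $\pi_{\mathfrak{s}}P:=H'_{p,q}$. On $\ker(\Delta_x,\Delta_u)$: $S_x=\pi_{\mathfrak{s}}\langle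 x,\partial_u\rangle$, $S_u=\pi_{\mathfrak{s}}\langle u,\partial_x\rangle$, $A=\pi_{\mathfrak{s}}\langle\partial_u,\partial_x\rangle$, $C=\pi_{\mathfrak{s}}\langle u,x\rangle$. Convention: a quotient $T/G$ with $G$ polynomial in $H_x,H_u$ means $G^{-1}T$; rational functions of $H_x,H_u$ (written to the left or as denominators) are evaluated at the eigenvalues of $H_x,H_u$ on the bihomogeneous output of the operator product. *)

(* Defs.v *)
From HB Require Import structures.
From mathcomp Require Import all_boot all_order all_algebra.
From mathcomp Require Import reals.
From mathcomp.real_closed Require Import complex.
From mathcomp Require Import mpoly.
From Stdlib Require Import ClassicalEpsilon.

Set Implicit Arguments.
Unset Strict Implicit.
Unset Printing Implicit Defensive.

Import GRing.Theory.
Local Open Scope ring_scope.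

Section HarmonicOps.
Variables (R : realType) (m : nat).

Definition Cx := complex R.

(* polynomials in (x, u) in R^(2m): variables indexed by 'I_(m + m);
   x_j is variable  lshift m j,  u_j is variable  rshift m j. *)
Definition Pol := {mpoly Cx[m + m]}.

Definition ix (j : 'I_m) : 'I_(m + m) := lshift m j.
Definition iu (j : 'I_m) : 'I_(m + m) := rshift m j.

Definition xv (j : 'I_m) : Pol := 'X_(ix j).
Definition uv (j : 'I_m) : Pol := 'X_(iu j).

Definition dx (j : 'I_m) (P : Pol) : Pol := P^`M(ix j).
Definition du (j : 'I_m) (P : Pol) : Pol := P^`M(iu j).

Definition degx (mo : 'X_{1..m + m}) : nat := (\sum_(j < m) mo (ix j))%N.
Definition degu (mo : 'X_{1..m + m}) : nat := (\sum_(j < m) mo (iu j))%N.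

Definition bihomog (p q : nat) (P : Pol) : Prop :=
  forall mo, mo \in msupp P -> degx mo = p /\ degu mo = q.

Definition normx2 : Pol := \sum_(j < m) xv j ^+ 2.
Definition normu2 : Pol := \sum_(j < m) uv j ^+ 2.
Definition Lapx (P : Pol) : Pol := \sum_(j < m) dx j (dx j P).
Definition Lapu (P : Pol) : Pol := \sum_(j < m) du j (du j P).

Definition harmonic (P : Pol) : Prop := Lapx P = 0 /\ Lapu P = 0.

(* H is the component H'_{0,0} of the (unique) Fischer-type decomposition
   P = sum_{a,b} |x|^{2a} |u|^{2b} H'_{a,b}, with every H'_{a,b} in
   ker(Delta_x, Delta_u).  (On bihomogeneous P of bidegree (p,q) this is
   the decomposition of the paper; in general it is its linear extension.) *)
Definition pis_spec (P H : Pol) : Prop :=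
  exists (N : nat) (h : nat -> nat -> Pol),
    (0 < N)%N /\
    (forall a b, harmonic (h a b)) /\
    P = \sum_(a < N) \sum_(b < N) (normx2 ^+ a * normu2 ^+ b * h a b) /\
    H = h 0%N 0%N.

Definition pis (P : Pol) : Pol :=
  epsilon (inhabits (0 : Pol)) (fun H => pis_spec P H).

Definition x_du (P : Pol) : Pol := \sum_(j < m) xv j * du j P.
Definition u_dx (P : Pol) : Pol := \sum_(j < m) uv j * dx j P.
Definition du_dx (P : Pol) : Pol := \sum_(j < m) du j (dx j P).
Definition ux : Pol := \sum_(j < m) uv j * xv j.

Definition Sx (P : Pol) : Pol := pis (x_du P).
Definition Su (P : Pol) : Pol := pis (u_dx P).
Definition Aop (P : Pol) : Pol := pis (du_dx P).
Definition Cop (P : Pol) : Pol := pis (ux * P).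

(* eigenvalues of H_x = -(E_x + m/2) and H_u = -(E_u + m/2) on P_{p,q} *)
Definition eigHx (p : nat) : Cx := - (p%:R + m%:R / 2%:R).
Definition eigHu (q : nat) : Cx := - (q%:R + m%:R / 2%:R).
End HarmonicOps.

(* Main.v *)
Require Import Defs.
From HB Require Import structures.
From mathcomp Require Import all_boot all_order all_algebra.
From mathcomp Require Import reals.
From mathcomp.real_closed Require Import complex.
From mathcomp Require Import mpoly.
From mathcomp Require Import ring.
From Stdlib Require Import ClassicalEpsilon.

Set Implicit Arguments.
Unset Strict Implicit.
Unset Printing Implicit Defensive.

Import GRing.Theory Num.Theory.
Local Open Scope ring_scope.

Section Work.
Variables (R : realType) (m : nat).
Local Notation K := (Cx R).
Local Notation P := (Pol R m).
Local Notation nx := (normx2 R m).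
Local Notation nu := (normu2 R m).
Local Notation uxp := (ux R m).
Local Notation X j := (@xv R m j).
Local Notation U j := (@uv R m j).
Implicit Types (G f g : P).

Lemma dXX (i k : 'I_(m + m)) : (('X_i : P)^`M(k)) = (i == k)%:R.
Proof.
rewrite mderivX mnm1E; case: eqP => [->|_]; last by rewrite scale0r.
have ->: (U_(k) - U_(k))%MM = 0%MM by apply/mnmP=> l; rewrite mnmBE subnn mnm0E.
by rewrite mpolyX0 scale1r.
Qed.

Lemma dx_xv j k : dx k (X j) = (j == k)%:R.
Proof. by rewrite /dx /xv dXX /ix eq_lshift. Qed.
Lemma dx_uv j k : dx k (U j) = 0.
Proof. by rewrite /dx /uv dXX /ix /iu eq_rlshift. Qed.
Lemma du_xv j k : du k (X j) = 0.
Proof. by rewrite /du /xv dXX /ix /iu eq_lrshift. Qed.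
Lemma du_uv j k : du k (U j) = (j == k)%:R.
Proof. by rewrite /du /uv dXX /iu eq_rshift. Qed.

Lemma sum_delta (F : 'I_m -> P) k : \sum_(j < m) (j == k)%:R * F j = F k.
Proof.
rewrite (bigD1 k) //= eqxx mul1r big1 ?addr0 // => j /negbTE ->.
by rewrite mul0r.
Qed.
Lemma sum_delta' (F : 'I_m -> P) k : \sum_(j < m) F j * (j == k)%:R = F k.
Proof. by under eq_bigr do rewrite mulrC; apply: sum_delta. Qed.

Lemma dxM k (f g : P) : dx k (f * g) = dx k f * g + f * dx k g.
Proof. exact: mderivM. Qed.
Lemma duM k (f g : P) : du k (f * g) = du k f * g + f * du k g.
Proof. exact: mderivM. Qed.
Lemma dxD k (f g : P) : dx k (f + g) = dx k f + dx k g.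
Proof. exact: mderivD. Qed.
Lemma duD k (f g : P) : du k (f + g) = du k f + du k g.
Proof. exact: mderivD. Qed.
Lemma dxZ k c (f : P) : dx k (c *: f) = c *: dx k f.
Proof. exact: mderivZ. Qed.
Lemma duZ k c (f : P) : du k (c *: f) = c *: du k f.
Proof. exact: mderivZ. Qed.
Lemma dx_sum k (F : 'I_m -> P) : dx k (\sum_j F j) = \sum_j dx k (F j).
Proof. exact: raddf_sum. Qed.
Lemma du_sum k (F : 'I_m -> P) : du k (\sum_j F j) = \sum_j du k (F j).
Proof. exact: raddf_sum. Qed.
Lemma dxdu k l (f : P) : dx k (du l f) = du l (dx k f).
Proof. exact: mderiv_comm. Qed.
Lemma dxdx k l (f : P) : dx k (dx l f) = dx l (dx k f).
Proof. exact: mderiv_comm. Qed.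
Lemma dudu k l (f : P) : du k (du l f) = du l (du k f).
Proof. exact: mderiv_comm. Qed.

Lemma dx_nx k : dx k nx = X k *+ 2.
Proof.
rewrite /normx2 dx_sum; under eq_bigr do rewrite expr2 dxM !dx_xv.
by rewrite big_split sum_delta sum_delta'.
Qed.
Lemma du_nx k : du k nx = 0.
Proof.
rewrite /normx2 du_sum big1 // => j _; by rewrite expr2 duM !du_xv mul0r mulr0 addr0.
Qed.
Lemma du_nu k : du k nu = U k *+ 2.
Proof.
rewrite /normu2 du_sum; under eq_bigr do rewrite expr2 duM !du_uv.
by rewrite big_split sum_delta sum_delta'.
Qed.
Lemma dx_nu k : dx k nu = 0.
Proof.
rewrite /normu2 dx_sum big1 // => j _; by rewrite expr2 dxM !dx_uv mul0r mulr0 addr0.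
Qed.
Lemma dx_ux k : dx k uxp = U k.
Proof.
rewrite /ux dx_sum; under eq_bigr do rewrite dxM dx_uv dx_xv mul0r add0r.
by rewrite sum_delta'.
Qed.
Lemma du_ux k : du k uxp = X k.
Proof.
rewrite /ux du_sum; under eq_bigr do rewrite duM du_uv du_xv mulr0 addr0.
by rewrite sum_delta.
Qed.

Definition Ex (G : P) : P := \sum_(j < m) X j * dx j G.
Definition Eu (G : P) : P := \sum_(j < m) U j * du j G.

Lemma dxMn k (f : P) n : dx k (f *+ n) = dx k f *+ n.
Proof. exact: mderivMn. Qed.
Lemma duMn k (f : P) n : du k (f *+ n) = du k f *+ n.
Proof. exact: mderivMn. Qed.
Lemma dxN k (f : P) : dx k (- f) = - dx k f.
Proof. exact: mderivN. Qed.
Lemma duN k (f : P) : du k (- f) = - du k f.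
Proof. exact: mderivN. Qed.
Lemma dxB k (f g : P) : dx k (f - g) = dx k f - dx k g.
Proof. exact: mderivB. Qed.
Lemma duB k (f g : P) : du k (f - g) = du k f - du k g.
Proof. exact: mderivB. Qed.

Lemma sum_const_m (c : P) : \sum_(j < m) c = c *+ m.
Proof. by rewrite sumr_const card_ord. Qed.

Lemma sumMn (F : 'I_m -> P) n : (\sum_j F j) *+ n = \sum_j F j *+ n.
Proof. by rewrite sumrMnl. Qed.

Lemma Lapx_nx G : Lapx (nx * G) = nx * Lapx G + Ex G *+ 4 + G *+ (2 * m).
Proof.
rewrite /Lapx /Ex.
rewrite -sumrMnl.
rewrite (mulrnA G 2 m) -sum_const_m mulr_sumr -!big_split /=.
apply: eq_bigr => j _.
by rewrite !(dxM, dxD, dxMn, dx_nx, dx_xv) eqxx /=; ring.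
Qed.

Lemma Lapx_lin : linear (@Lapx R m).
Proof.
move=> a f g; rewrite /Lapx scaler_sumr -big_split; apply: eq_bigr => j _.
by rewrite !(dxD, dxZ).
Qed.
HB.instance Definition _ := GRing.isLinear.Build K P P _ (@Lapx R m) Lapx_lin.
Lemma Lapu_lin : linear (@Lapu R m).
Proof.
move=> a f g; rewrite /Lapu scaler_sumr -big_split; apply: eq_bigr => j _.
by rewrite !(duD, duZ).
Qed.
HB.instance Definition _ := GRing.isLinear.Build K P P _ (@Lapu R m) Lapu_lin.
Lemma du_dx_lin : linear (@du_dx R m).
Proof.
move=> a f g; rewrite /du_dx scaler_sumr -big_split; apply: eq_bigr => j _.
by rewrite !(duD, duZ, dxD, dxZ).
Qed.
HB.instance Definition _ := GRing.isLinear.Build K P P _ (@du_dx R m) du_dx_lin.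
Lemma x_du_lin : linear (@x_du R m).
Proof.
move=> a f g; rewrite /x_du scaler_sumr -big_split; apply: eq_bigr => j _.
by rewrite !(duD, duZ) mulrDr scalerAr.
Qed.
HB.instance Definition _ := GRing.isLinear.Build K P P _ (@x_du R m) x_du_lin.
Lemma u_dx_lin : linear (@u_dx R m).
Proof.
move=> a f g; rewrite /u_dx scaler_sumr -big_split; apply: eq_bigr => j _.
by rewrite !(dxD, dxZ) mulrDr scalerAr.
Qed.
HB.instance Definition _ := GRing.isLinear.Build K P P _ (@u_dx R m) u_dx_lin.
Lemma Ex_lin : linear Ex.
Proof.
move=> a f g; rewrite /Ex scaler_sumr -big_split; apply: eq_bigr => j _.
by rewrite !(dxD, dxZ) mulrDr scalerAr.
Qed.
HB.instance Definition _ := GRing.isLinear.Build K P P _ Ex Ex_lin.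
Lemma Eu_lin : linear Eu.
Proof.
move=> a f g; rewrite /Eu scaler_sumr -big_split; apply: eq_bigr => j _.
by rewrite !(duD, duZ) mulrDr scalerAr.
Qed.
HB.instance Definition _ := GRing.isLinear.Build K P P _ Eu Eu_lin.

Lemma test_lin (f g : P) c : x_du (f - c *: g) = x_du f - c *: x_du g.
Proof. by rewrite linearB linearZ. Qed.

Lemma dx_xdu i G : dx i (x_du G) = du i G + x_du (dx i G).
Proof.
rewrite /x_du dx_sum; under eq_bigr do rewrite dxM dx_xv dxdu.
by rewrite big_split sum_delta.
Qed.
Lemma du_xdu i G : du i (x_du G) = x_du (du i G).
Proof.
rewrite /x_du du_sum; apply: eq_bigr => j _.
by rewrite duM du_xv mul0r add0r dudu.
Qed.
Lemma du_udx i G : du i (u_dx G) = dx i G + u_dx (du i G).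
Proof.
rewrite /u_dx du_sum; under eq_bigr do rewrite duM du_uv -dxdu.
by rewrite big_split sum_delta.
Qed.
Lemma dx_udx i G : dx i (u_dx G) = u_dx (dx i G).
Proof.
rewrite /u_dx dx_sum; apply: eq_bigr => j _.
by rewrite dxM dx_uv mul0r add0r dxdx.
Qed.
Lemma dx_Ex i G : dx i (Ex G) = dx i G + Ex (dx i G).
Proof.
rewrite /Ex dx_sum; under eq_bigr do rewrite dxM dx_xv dxdx.
by rewrite big_split sum_delta.
Qed.
Lemma du_Ex i G : du i (Ex G) = Ex (du i G).
Proof.
rewrite /Ex du_sum; apply: eq_bigr => j _.
by rewrite duM du_xv mul0r add0r dxdu.
Qed.
Lemma du_Eu i G : du i (Eu G) = du i G + Eu (du i G).
Proof.
rewrite /Eu du_sum; under eq_bigr do rewrite duM du_uv dudu.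
by rewrite big_split sum_delta.
Qed.
Lemma dx_Eu i G : dx i (Eu G) = Eu (dx i G).
Proof.
rewrite /Eu dx_sum; apply: eq_bigr => j _.
by rewrite dxM dx_uv mul0r add0r dxdu.
Qed.
Lemma dx_dudx i G : dx i (du_dx G) = du_dx (dx i G).
Proof.
rewrite /du_dx dx_sum; apply: eq_bigr => j _; by rewrite dxdu dxdx.
Qed.
Lemma du_dudx i G : du i (du_dx G) = du_dx (du i G).
Proof.
rewrite /du_dx du_sum; apply: eq_bigr => j _; by rewrite dudu dxdu.
Qed.

Lemma Lapx_xdu G : Lapx (x_du G) = x_du (Lapx G) + du_dx G *+ 2.
Proof.
rewrite /Lapx raddf_sum /du_dx -sumrMnl -big_split /=; apply: eq_bigr => j _.
by rewrite !(dx_xdu, dxD) -dxdu; rewrite addrC addrA mulr2n.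
Qed.
Lemma Lapu_xdu G : Lapu (x_du G) = x_du (Lapu G).
Proof.
rewrite /Lapu raddf_sum; apply: eq_bigr => j _; by rewrite !du_xdu.
Qed.
Lemma Lapu_udx G : Lapu (u_dx G) = u_dx (Lapu G) + du_dx G *+ 2.
Proof.
rewrite /Lapu raddf_sum /du_dx -sumrMnl -big_split /=; apply: eq_bigr => j _.
by rewrite !(du_udx, duD) dxdu; rewrite addrC addrA mulr2n.
Qed.
Lemma Lapx_udx G : Lapx (u_dx G) = u_dx (Lapx G).
Proof.
rewrite /Lapx raddf_sum; apply: eq_bigr => j _; by rewrite !dx_udx.
Qed.
Lemma Lapx_dudx G : Lapx (du_dx G) = du_dx (Lapx G).
Proof.
rewrite /Lapx raddf_sum; apply: eq_bigr => j _; by rewrite !dx_dudx.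
Qed.
Lemma Lapu_dudx G : Lapu (du_dx G) = du_dx (Lapu G).
Proof.
rewrite /Lapu raddf_sum; apply: eq_bigr => j _; by rewrite !du_dudx.
Qed.

Lemma dx_nuM i G : dx i (nu * G) = nu * dx i G.
Proof. by rewrite dxM dx_nu mul0r add0r. Qed.
Lemma du_nxM i G : du i (nx * G) = nx * du i G.
Proof. by rewrite duM du_nx mul0r add0r. Qed.
Lemma dx_nxM i G : dx i (nx * G) = X i * G *+ 2 + nx * dx i G.
Proof. by rewrite dxM dx_nx mulrnAl. Qed.
Lemma du_nuM i G : du i (nu * G) = U i * G *+ 2 + nu * du i G.
Proof. by rewrite duM du_nu mulrnAl. Qed.
Lemma dx_uxM i G : dx i (uxp * G) = U i * G + uxp * dx i G.
Proof. by rewrite dxM dx_ux. Qed.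
Lemma du_uxM i G : du i (uxp * G) = X i * G + uxp * du i G.
Proof. by rewrite duM du_ux. Qed.
Lemma dx_UM i j G : dx i (U j * G) = U j * dx i G.
Proof. by rewrite dxM dx_uv mul0r add0r. Qed.
Lemma du_XM i j G : du i (X j * G) = X j * du i G.
Proof. by rewrite duM du_xv mul0r add0r. Qed.
Lemma dx_XM i j G : dx i (X j * G) = (j == i)%:R * G + X j * dx i G.
Proof. by rewrite dxM dx_xv. Qed.
Lemma du_UM i j G : du i (U j * G) = (j == i)%:R * G + U j * du i G.
Proof. by rewrite duM du_uv. Qed.

Lemma Lapu_nu G : Lapu (nu * G) = nu * Lapu G + Eu G *+ 4 + G *+ (2 * m).
Proof.
rewrite /Lapu /Eu -sumrMnl (mulrnA G 2 m) -sum_const_m mulr_sumr -!big_split /=.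
apply: eq_bigr => j _.
by rewrite !(duM, duD, duMn, du_nu, du_uv) eqxx /=; ring.
Qed.
Lemma Lapx_nu G : Lapx (nu * G) = nu * Lapx G.
Proof. by rewrite /Lapx mulr_sumr; apply: eq_bigr => j _; rewrite !dx_nuM. Qed.
Lemma Lapu_nx G : Lapu (nx * G) = nx * Lapu G.
Proof. by rewrite /Lapu mulr_sumr; apply: eq_bigr => j _; rewrite !du_nxM. Qed.
Lemma Lapx_ux G : Lapx (uxp * G) = uxp * Lapx G + u_dx G *+ 2.
Proof.
rewrite /Lapx /u_dx mulr_sumr -sumrMnl -big_split /=; apply: eq_bigr => j _.
by rewrite dx_uxM dxD dx_UM dx_uxM; ring.
Qed.
Lemma Lapu_ux G : Lapu (uxp * G) = uxp * Lapu G + x_du G *+ 2.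
Proof.
rewrite /Lapu /x_du mulr_sumr -sumrMnl -big_split /=; apply: eq_bigr => j _.
by rewrite du_uxM duD du_XM du_uxM; ring.
Qed.
Lemma dudx_nx G : du_dx (nx * G) = nx * du_dx G + x_du G *+ 2.
Proof.
rewrite /du_dx /x_du mulr_sumr -sumrMnl -big_split /=; apply: eq_bigr => j _.
by rewrite dx_nxM duD duMn du_XM du_nxM; ring.
Qed.
Lemma dudx_nu G : du_dx (nu * G) = nu * du_dx G + u_dx G *+ 2.
Proof.
rewrite /du_dx /u_dx mulr_sumr -sumrMnl -big_split /=; apply: eq_bigr => j _.
by rewrite dx_nuM du_nuM -dxdu; ring.
Qed.
Lemma dudx_ux G : du_dx (uxp * G) = uxp * du_dx G + Ex G + Eu G + G *+ m.
Proof.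
rewrite /du_dx /Ex /Eu mulr_sumr -sum_const_m -!big_split /=; apply: eq_bigr => j _.
by rewrite dx_uxM duD du_UM du_uxM eqxx /=; ring.
Qed.
Lemma xdu_nu G : x_du (nu * G) = nu * x_du G + uxp * G *+ 2.
Proof.
rewrite /x_du mulr_sumr [uxp]/ux [Z in _ + Z *+ 2]mulr_suml -sumrMnl -big_split /=.
apply: eq_bigr => j _.
by rewrite du_nuM; ring.
Qed.
Lemma xdu_nx G : x_du (nx * G) = nx * x_du G.
Proof.
by rewrite /x_du mulr_sumr; apply: eq_bigr => j _; rewrite du_nxM; ring.
Qed.
Lemma udx_nx G : u_dx (nx * G) = nx * u_dx G + uxp * G *+ 2.
Proof.
rewrite /u_dx mulr_sumr [uxp]/ux [Z in _ + Z *+ 2]mulr_suml -sumrMnl -big_split /=.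
apply: eq_bigr => j _.
by rewrite dx_nxM; ring.
Qed.
Lemma udx_nu G : u_dx (nu * G) = nu * u_dx G.
Proof.
by rewrite /u_dx mulr_sumr; apply: eq_bigr => j _; rewrite dx_nuM; ring.
Qed.

Lemma Ex_udx G : Ex (u_dx G) = u_dx (Ex G) - u_dx G.
Proof.
have -> : u_dx (Ex G) = u_dx G + \sum_k U k * Ex (dx k G).
  by rewrite {1}/u_dx; under eq_bigr do rewrite dx_Ex mulrDr; rewrite big_split.
rewrite addrC addKr /Ex; under eq_bigr do rewrite dx_udx /u_dx mulr_sumr.
rewrite exchange_big /=; apply: eq_bigr => k _; rewrite mulr_sumr.
by apply: eq_bigr => j _; rewrite dxdx; ring.
Qed.
Lemma Eu_xdu G : Eu (x_du G) = x_du (Eu G) - x_du G.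
Proof.
have -> : x_du (Eu G) = x_du G + \sum_k X k * Eu (du k G).
  by rewrite {1}/x_du; under eq_bigr do rewrite du_Eu mulrDr; rewrite big_split.
rewrite addrC addKr /Eu; under eq_bigr do rewrite du_xdu /x_du mulr_sumr.
rewrite exchange_big /=; apply: eq_bigr => k _; rewrite mulr_sumr.
by apply: eq_bigr => j _; rewrite dudu; ring.
Qed.
Lemma Eu_udx G : Eu (u_dx G) = u_dx (Eu G) + u_dx G.
Proof.
have -> : Eu (u_dx G) = u_dx G + \sum_k U k * u_dx (du k G).
  by rewrite {1}/Eu; under eq_bigr do rewrite du_udx mulrDr; rewrite big_split.
rewrite addrC; congr (_ + _); rewrite {2}/u_dx.
transitivity (\sum_k \sum_j U k * (U j * dx j (du k G))).
  by apply: eq_bigr => k _; rewrite /u_dx mulr_sumr.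
rewrite exchange_big /=; apply: eq_bigr => j _.
rewrite dx_Eu /Eu mulr_sumr; apply: eq_bigr => k _.
by rewrite dxdu; ring.
Qed.
Lemma Ex_xdu G : Ex (x_du G) = x_du (Ex G) + x_du G.
Proof.
have -> : Ex (x_du G) = x_du G + \sum_k X k * x_du (dx k G).
  by rewrite {1}/Ex; under eq_bigr do rewrite dx_xdu mulrDr; rewrite big_split.
rewrite addrC; congr (_ + _); rewrite {2}/x_du.
transitivity (\sum_k \sum_j X k * (X j * du j (dx k G))).
  by apply: eq_bigr => k _; rewrite /x_du mulr_sumr.
rewrite exchange_big /=; apply: eq_bigr => j _.
rewrite du_Ex /Ex mulr_sumr; apply: eq_bigr => k _.
by rewrite dxdu; ring.
Qed.
Lemma Ex_dudx G : Ex (du_dx G) = du_dx (Ex G) - du_dx G.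
Proof.
have -> : du_dx (Ex G) = du_dx G + Ex (du_dx G).
  rewrite {1}/du_dx; under eq_bigr do rewrite dx_Ex duD du_Ex.
  by rewrite big_split /= raddf_sum.
by rewrite addrC addKr.
Qed.
Lemma Eu_dudx G : Eu (du_dx G) = du_dx (Eu G) - du_dx G.
Proof.
have -> : du_dx (Eu G) = du_dx G + Eu (du_dx G).
  rewrite {1}/du_dx; under eq_bigr do rewrite dx_Eu du_Eu.
  by rewrite big_split /= raddf_sum.
by rewrite addrC addKr.
Qed.
Lemma Ex_nu G : Ex (nu * G) = nu * Ex G.
Proof. by rewrite /Ex mulr_sumr; apply: eq_bigr => j _; rewrite dx_nuM; ring. Qed.
Lemma Eu_nx G : Eu (nx * G) = nx * Eu G.
Proof. by rewrite /Eu mulr_sumr; apply: eq_bigr => j _; rewrite du_nxM; ring. Qed.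

Lemma ExZ c f : Ex (c *: f) = c *: Ex f. Proof. exact: linearZ. Qed.
Lemma EuZ c f : Eu (c *: f) = c *: Eu f. Proof. exact: linearZ. Qed.
Lemma Ex_sum (I : Type) (r : seq I) (F : I -> P) :
  Ex (\sum_(i <- r) F i) = \sum_(i <- r) Ex (F i).
Proof. exact: raddf_sum. Qed.
Lemma Eu_sum (I : Type) (r : seq I) (F : I -> P) :
  Eu (\sum_(i <- r) F i) = \sum_(i <- r) Eu (F i).
Proof. exact: raddf_sum. Qed.

Lemma X_shift (i : 'I_(m + m)) (mo : 'X_{1..m + m}) :
  ('X_i : P) * ((mo i)%:R *: 'X_[mo - U_(i)]) = (mo i)%:R *: 'X_[mo].
Proof.
case: (eqVneq (mo i) 0%N) => [->|nz]; first by rewrite !scale0r mulr0.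
rewrite -scalerAr -mpolyXD addmC submK // lep1mP; exact: nz.
Qed.

Lemma Ex_X (mo : 'X_{1..m + m}) : Ex 'X_[mo] = (degx mo)%:R *: 'X_[mo].
Proof.
rewrite /Ex /degx natr_sum scaler_suml; apply: eq_bigr => j _.
by rewrite /dx mderivX /xv X_shift.
Qed.
Lemma Eu_X (mo : 'X_{1..m + m}) : Eu 'X_[mo] = (degu mo)%:R *: 'X_[mo].
Proof.
rewrite /Eu /degu natr_sum scaler_suml; apply: eq_bigr => j _.
by rewrite /du mderivX /uv X_shift.
Qed.

Lemma Ex_bihomog p q G : bihomog p q G -> Ex G = p%:R *: G.
Proof.
move=> hG; rewrite {1 2}[G]mpolyE Ex_sum scaler_sumr.
rewrite big_seq [RHS]big_seq; apply: eq_bigr => mo hmo.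
by rewrite ExZ Ex_X (proj1 (hG _ hmo)) scalerA mulrC -scalerA.
Qed.
Lemma Eu_bihomog p q G : bihomog p q G -> Eu G = q%:R *: G.
Proof.
move=> hG; rewrite {1 2}[G]mpolyE Eu_sum scaler_sumr.
rewrite big_seq [RHS]big_seq; apply: eq_bigr => mo hmo.
by rewrite EuZ Eu_X (proj2 (hG _ hmo)) scalerA mulrC -scalerA.
Qed.

Definition wt (mo : 'X_{1..m + m}) : nat := (\prod_(i < m + m) (mo i)`!)%N.

Lemma wt_shift (i : 'I_(m + m)) mo : wt (U_(i) + mo)%MM = (wt mo * (mo i).+1)%N.
Proof.
rewrite /wt (bigD1 i) //= [in RHS](bigD1 i) //= mnmDE mnm1E eqxx add1n factS.
rewrite (eq_bigr (fun k => (mo k)`!)); first by rewrite [((mo i).+1 * _)%N]mulnC mulnAC.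
by move=> k nk; rewrite mnmDE mnm1E eq_sym (negbTE nk) add0n.
Qed.

Definition ip (f g : P) : K :=
  \sum_(mo <- msupp f) (wt mo)%:R * f@_mo * (g@_mo)^*.

Lemma ip_seq f g (s : seq 'X_{1..m + m}) : uniq s -> {subset msupp f <= s} ->
  ip f g = \sum_(mo <- s) (wt mo)%:R * f@_mo * (g@_mo)^*.
Proof.
move=> us sub; rewrite (bigID (fun mo => mo \in msupp f)) /=.
rewrite [Z in _ = _ + Z]big1 ?addr0; last first.
  by move=> mo /memN_msupp_eq0 ->; rewrite mulr0 mul0r.
rewrite -big_filter; apply: perm_big; apply: uniq_perm.
- exact: msupp_uniq.
- exact: filter_uniq.
by move=> mo; rewrite mem_filter; case hm: (mo \in msupp f) => //=; rewrite sub.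
Qed.

Lemma ipD f1 f2 g : ip (f1 + f2) g = ip f1 g + ip f2 g.
Proof.
pose s := undup (msupp f1 ++ msupp f2).
have us : uniq s by exact: undup_uniq.
rewrite (@ip_seq (f1 + f2) g s) //; last first.
  by move=> mo /msuppD_le; rewrite mem_undup.
rewrite (@ip_seq f1 g s) ?(@ip_seq f2 g s) //; last first.
- by move=> mo hm; rewrite mem_undup mem_cat hm ?orbT.
- by move=> mo hm; rewrite mem_undup mem_cat hm ?orbT.
rewrite -big_split /=; apply: eq_bigr => mo _; rewrite mcoeffD; ring.
Qed.
Lemma ip0 g : ip 0 g = 0.
Proof. by rewrite /ip msupp0 big_nil. Qed.
Lemma ip_sum (F : 'I_m -> P) g : ip (\sum_j F j) g = \sum_j ip (F j) g.
Proof. exact: (big_morph (fun f => ip f g) (fun a b => ipD a b g) (ip0 g)). Qed.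
Lemma ipDr f g1 g2 : ip f (g1 + g2) = ip f g1 + ip f g2.
Proof.
rewrite /ip -big_split /=; apply: eq_bigr => mo _; rewrite mcoeffD rmorphD; ring.
Qed.
Lemma ip0r f : ip f 0 = 0.
Proof. by rewrite /ip big1 // => mo _; rewrite mcoeff0 rmorph0 mulr0. Qed.
Lemma ip_sumr f (F : 'I_m -> P) : ip f (\sum_j F j) = \sum_j ip f (F j).
Proof. exact: (big_morph (fun g => ip f g) (fun a b => ipDr f a b) (ip0r f)). Qed.

Lemma ipX (i : 'I_(m + m)) f g : ip ('X_i * f) g = ip f (g^`M(i)).
Proof.
rewrite mulrC /ip (perm_big _ (msuppMX f U_(i))) big_map.
apply: eq_bigr => mo _.
rewrite mcoeffMX mcoeff_mderiv wt_shift addmC rmorphMn natrM.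
by rewrite -mulr_natr; ring.
Qed.

Lemma ip_nx A h : ip (nx * A) h = ip A (Lapx h).
Proof.
rewrite /normx2 mulr_suml ip_sum /Lapx ip_sumr; apply: eq_bigr => j _.
by rewrite expr2 -mulrA /xv !ipX.
Qed.
Lemma ip_nu A h : ip (nu * A) h = ip A (Lapu h).
Proof.
rewrite /normu2 mulr_suml ip_sum /Lapu ip_sumr; apply: eq_bigr => j _.
by rewrite expr2 -mulrA /uv !ipX.
Qed.

Lemma ip_eq0 h : ip h h = 0 -> h = 0.
Proof.
move=> /eqP; rewrite /ip psumr_eq0; last first.
  move=> mo _; rewrite -mulrA mulr_ge0 ?ler0n //; exact: mul_conjC_ge0.
move=> /allP hall; apply: msuppnil0.
case E: (msupp h) => [|mo s] //.
have hm : mo \in msupp h by rewrite E mem_head.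
have := hall mo hm; rewrite /= -mulrA mulf_eq0 pnatr_eq0 mul_conjC_eq0.
have := hm; rewrite mcoeff_msupp => /negbTE ->.
rewrite orbF /wt eqn0Ngt prodn_gt0 // => i; exact: fact_gt0.
Qed.

Definition inI (f : P) := exists Q1 Q2, f = nx * Q1 + nu * Q2.

Lemma harm_inI h : harmonic h -> inI h -> h = 0.
Proof.
move=> [hx hu] [Q1 [Q2 E]]; apply: ip_eq0.
by rewrite {1}E ipD ip_nx ip_nu hx hu !ip0r addr0.
Qed.

Lemma harm0 : harmonic (0 : P).
Proof. by split; rewrite raddf0. Qed.
Lemma harmD f g : harmonic f -> harmonic g -> harmonic (f + g).
Proof. by move=> [a1 a2] [b1 b2]; split; rewrite raddfD /= ?a1 ?a2 ?b1 ?b2 addr0. Qed.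
Lemma harmZ c f : harmonic f -> harmonic (c *: f).
Proof. by move=> [h1 h2]; split; rewrite linearZ /= ?h1 ?h2 scaler0. Qed.
Lemma harmN f : harmonic f -> harmonic (- f).
Proof. by move=> [h1 h2]; split; rewrite raddfN /= ?h1 ?h2 oppr0. Qed.
Lemma harmB f g : harmonic f -> harmonic g -> harmonic (f - g).
Proof. by move=> hf hg; exact: (harmD hf (harmN hg)). Qed.

Lemma inI0 : inI 0.
Proof. by exists 0, 0; rewrite !mulr0 addr0. Qed.
Lemma inID f g : inI f -> inI g -> inI (f + g).
Proof.
move=> [a [b ->]] [c [d ->]]; exists (a + c), (b + d); ring.
Qed.
Lemma inIM g f : inI f -> inI (g * f).
Proof. by move=> [a [b ->]]; exists (g * a), (g * b); ring. Qed.
Lemma inIZ c f : inI f -> inI (c *: f).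
Proof. by move=> hf; rewrite -mul_mpolyC; apply: inIM. Qed.
Lemma inIN f : inI f -> inI (- f).
Proof. by move=> hf; rewrite -scaleN1r; apply: inIZ. Qed.
Lemma inIB f g : inI f -> inI g -> inI (f - g).
Proof. by move=> hf hg; apply: inID => //; apply: inIN. Qed.
Lemma inI_nx f : inI (nx * f).
Proof. by exists f, 0; rewrite mulr0 addr0. Qed.
Lemma inI_nu f : inI (nu * f).
Proof. by exists 0, f; rewrite mulr0 add0r. Qed.
Lemma inIMn f n : inI f -> inI (f *+ n).
Proof. by move=> hf; rewrite -scaler_nat; apply: inIZ. Qed.

Lemma inI_sum (I : Type) (r : seq I) (F : I -> P) :
  (forall i, inI (F i)) -> inI (\sum_(i <- r) F i).
Proof. by move=> hF; apply: big_ind => //; [exact: inI0|exact: inID]. Qed.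

Lemma spec_I f h0 : pis_spec f h0 -> harmonic h0 /\ inI (f - h0).
Proof.
move=> [N [h [N0 [hh [-> ->]]]]]; split => //.
case: N N0 => // N _.
rewrite big_ord_recl /= big_ord_recl /= !expr0 !mul1r.
have E : forall a b c : P, a + b + c - a = b + c by move=> a b c; ring.
rewrite E /bump /=.
apply: inID; apply: inI_sum => i.
  by rewrite add1n exprS mul1r -!mulrA; apply: inI_nu.
apply: inI_sum => b; by rewrite add1n exprS -!mulrA; apply: inI_nx.
Qed.

Definition Dec2 (f : P) := exists h00 h10 h01 h11,
  [/\ harmonic h00, harmonic h10, harmonic h01 & harmonic h11] /\
  f = h00 + nx * h10 + nu * h01 + nx * nu * h11.

Lemma Dec2_spec f : Dec2 f -> exists H, pis_spec f H.
Proof.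
move=> [h00 [h10 [h01 [h11 [[H1 H2 H3 H4] ->]]]]].
exists h00, 2%N, (fun a b => if a == 0%N then (if b == 0%N then h00 else h01)
                             else (if b == 0%N then h10 else h11)).
split; first by []. split.
  by move=> a b; case: (a == 0%N); case: (b == 0%N).
split; last by [].
rewrite !big_ord_recl !big_ord0 /= !expr0 !expr1 !mul1r !mulr1 !addr0; ring.
Qed.

Lemma pis_eq f h : Dec2 f -> harmonic h -> inI (f - h) -> pis f = h.
Proof.
move=> /Dec2_spec ex hh hI.
have hs : pis_spec f (pis f) by apply: (epsilon_spec (inhabits 0) _ ex).
have [hp hpI] := spec_I hs.
apply/eqP; rewrite -subr_eq0; apply/eqP; apply: harm_inI.
  exact: harmB.
have -> : pis f - h = (f - h) - (f - pis f) by ring.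
exact: inIB.
Qed.

End Work.

Section Work2.
Variables (R : realType) (m : nat).
Local Notation K := (Cx R).
Local Notation P := (Pol R m).
Local Notation nx := (normx2 R m).
Local Notation nu := (normu2 R m).
Local Notation uxp := (ux R m).
Local Notation X j := (@xv R m j).
Local Notation U j := (@uv R m j).
Local Notation Ex := (@Ex R m).
Local Notation Eu := (@Eu R m).
Local Notation inI := (@inI R m).
Local Notation Dec2 := (@Dec2 R m).
Implicit Types (G f g : P).
Opaque normx2 normu2 ux.
Local Notation harm0 := (@harm0 R m).

Definition cst (d : K) : K := m%:R + 2%:R * d - 2%:R.
Definition SxF (d : K) G : P := x_du G - (cst d)^-1 *: (nx * du_dx G).
Definition SuF (e : K) G : P := u_dx G - (cst e)^-1 *: (nu * du_dx G).
Definition CF (d e : K) G : P :=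
  uxp * G - (cst d)^-1 *: (nx * SuF e G) - (cst e)^-1 *: (nu * SxF d G)
  - ((cst d)^-1 * (cst e)^-1) *: (nx * nu * du_dx G).

Lemma toP c f : c *: f = c%:MP * f.
Proof. by rewrite mul_mpolyC. Qed.
Lemma toPn f n : f *+ n = n%:R * f.
Proof. by rewrite mulr_natl. Qed.


Lemma Lapx_D f g : Lapx (f + g) = Lapx f + Lapx g. Proof. exact: raddfD. Qed.
Lemma Lapx_B f g : Lapx (f - g) = Lapx f - Lapx g. Proof. exact: raddfB. Qed.
Lemma Lapx_N f : Lapx (- f) = - Lapx f. Proof. exact: raddfN. Qed.
Lemma Lapx_Z c f : Lapx (c *: f) = c *: Lapx f. Proof. exact: linearZ. Qed.
Lemma Lapx_0 : Lapx (0 : P) = 0. Proof. exact: raddf0. Qed.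
Lemma Lapx_Mn f k : Lapx (f *+ k) = Lapx f *+ k. Proof. exact: raddfMn. Qed.
Lemma Lapu_D f g : Lapu (f + g) = Lapu f + Lapu g. Proof. exact: raddfD. Qed.
Lemma Lapu_B f g : Lapu (f - g) = Lapu f - Lapu g. Proof. exact: raddfB. Qed.
Lemma Lapu_N f : Lapu (- f) = - Lapu f. Proof. exact: raddfN. Qed.
Lemma Lapu_Z c f : Lapu (c *: f) = c *: Lapu f. Proof. exact: linearZ. Qed.
Lemma Lapu_0 : Lapu (0 : P) = 0. Proof. exact: raddf0. Qed.
Lemma Lapu_Mn f k : Lapu (f *+ k) = Lapu f *+ k. Proof. exact: raddfMn. Qed.
Lemma A_D f g : du_dx (f + g) = du_dx f + du_dx g. Proof. exact: raddfD. Qed.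
Lemma A_B f g : du_dx (f - g) = du_dx f - du_dx g. Proof. exact: raddfB. Qed.
Lemma A_N f : du_dx (- f) = - du_dx f. Proof. exact: raddfN. Qed.
Lemma A_Z c f : du_dx (c *: f) = c *: du_dx f. Proof. exact: linearZ. Qed.
Lemma A_0 : du_dx (0 : P) = 0. Proof. exact: raddf0. Qed.
Lemma A_Mn f k : du_dx (f *+ k) = du_dx f *+ k. Proof. exact: raddfMn. Qed.
Lemma xdu_D f g : x_du (f + g) = x_du f + x_du g. Proof. exact: raddfD. Qed.
Lemma xdu_B f g : x_du (f - g) = x_du f - x_du g. Proof. exact: raddfB. Qed.
Lemma xdu_N f : x_du (- f) = - x_du f. Proof. exact: raddfN. Qed.
Lemma xdu_Z c f : x_du (c *: f) = c *: x_du f. Proof. exact: linearZ. Qed.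
Lemma xdu_0 : x_du (0 : P) = 0. Proof. exact: raddf0. Qed.
Lemma xdu_Mn f k : x_du (f *+ k) = x_du f *+ k. Proof. exact: raddfMn. Qed.
Lemma udx_D f g : u_dx (f + g) = u_dx f + u_dx g. Proof. exact: raddfD. Qed.
Lemma udx_B f g : u_dx (f - g) = u_dx f - u_dx g. Proof. exact: raddfB. Qed.
Lemma udx_N f : u_dx (- f) = - u_dx f. Proof. exact: raddfN. Qed.
Lemma udx_Z c f : u_dx (c *: f) = c *: u_dx f. Proof. exact: linearZ. Qed.
Lemma udx_0 : u_dx (0 : P) = 0. Proof. exact: raddf0. Qed.
Lemma udx_Mn f k : u_dx (f *+ k) = u_dx f *+ k. Proof. exact: raddfMn. Qed.
Lemma Ex_D f g : Ex (f + g) = Ex f + Ex g. Proof. exact: raddfD. Qed.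
Lemma Ex_B f g : Ex (f - g) = Ex f - Ex g. Proof. exact: raddfB. Qed.
Lemma Ex_N f : Ex (- f) = - Ex f. Proof. exact: raddfN. Qed.
Lemma Ex_Z c f : Ex (c *: f) = c *: Ex f. Proof. exact: linearZ. Qed.
Lemma Ex_0 : Ex (0 : P) = 0. Proof. exact: raddf0. Qed.
Lemma Ex_Mn f k : Ex (f *+ k) = Ex f *+ k. Proof. exact: raddfMn. Qed.
Lemma Eu_D f g : Eu (f + g) = Eu f + Eu g. Proof. exact: raddfD. Qed.
Lemma Eu_B f g : Eu (f - g) = Eu f - Eu g. Proof. exact: raddfB. Qed.
Lemma Eu_N f : Eu (- f) = - Eu f. Proof. exact: raddfN. Qed.
Lemma Eu_Z c f : Eu (c *: f) = c *: Eu f. Proof. exact: linearZ. Qed.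
Lemma Eu_0 : Eu (0 : P) = 0. Proof. exact: raddf0. Qed.
Lemma Eu_Mn f k : Eu (f *+ k) = Eu f *+ k. Proof. exact: raddfMn. Qed.

Lemma lin1 (k : K) f L : k = 0 -> L = k%:MP * f -> L = 0.
Proof. by move=> -> ->; rewrite rmorph0 mul0r. Qed.
Lemma lin2 (k1 k2 : K) f1 f2 L : k1 = 0 -> k2 = 0 ->
  L = k1%:MP * f1 + k2%:MP * f2 -> L = 0.
Proof. by move=> -> -> ->; rewrite rmorph0 !mul0r addr0. Qed.
Ltac topoly := rewrite ?toP ?(rmorphB, rmorphD, rmorphM, rmorphN, rmorph_nat, rmorph1); ring.

Lemma LapxBZ f c g : Lapx (f - c *: g) = Lapx f - c *: Lapx g.
Proof. by rewrite Lapx_B Lapx_Z. Qed.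
Lemma LapuBZ f c g : Lapu (f - c *: g) = Lapu f - c *: Lapu g.
Proof. by rewrite Lapu_B Lapu_Z. Qed.

Lemma A_harm G : harmonic G -> harmonic (du_dx G).
Proof. by move=> [h1 h2]; split; rewrite ?Lapx_dudx ?Lapu_dudx ?h1 ?h2 raddf0. Qed.
Lemma Ex_A d G : Ex G = d *: G -> Ex (du_dx G) = (d - 1) *: du_dx G.
Proof. by move=> h; rewrite Ex_dudx h linearZ scalerBl scale1r. Qed.
Lemma Eu_A e G : Eu G = e *: G -> Eu (du_dx G) = (e - 1) *: du_dx G.
Proof. by move=> h; rewrite Eu_dudx h linearZ scalerBl scale1r. Qed.

Lemma SxF_harm d G : harmonic G -> Ex G = d *: G -> cst d != 0 ->
  harmonic (SxF d G).
Proof.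
move=> hG hE nz; have [hA1 hA2] := A_harm hG; case: hG => h1 h2.
split; rewrite /SxF ?Lapx_B ?Lapu_B ?Lapx_Z ?Lapu_Z.
  rewrite Lapx_xdu Lapx_nx h1 hA1 (Ex_A hE) raddf0 mulr0 add0r.
  rewrite !toP rmorphB rmorph1.
  set c := cst d.
  have hc : 2%:R - c^-1 * (4%:R * (d - 1) + (2 * m)%:R) = 0.
    rewrite /c /cst; field; exact: nz.
  apply: (@lin1 _ (du_dx G) _ hc); rewrite /c; topoly.
by rewrite Lapu_xdu Lapu_nx h2 hA2 mulr0 xdu_0 scaler0 subr0.
Qed.

Lemma SuF_harm e G : harmonic G -> Eu G = e *: G -> cst e != 0 ->
  harmonic (SuF e G).
Proof.
move=> hG hE nz; have [hA1 hA2] := A_harm hG; case: hG => h1 h2.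
split; rewrite /SuF ?Lapx_B ?Lapu_B ?Lapx_Z ?Lapu_Z; last first.
  rewrite Lapu_udx Lapu_nu h2 hA2 (Eu_A hE) udx_0 mulr0 add0r.
  set c := cst e.
  have hc : 2%:R - c^-1 * (4%:R * (e - 1) + (2 * m)%:R) = 0.
    rewrite /c /cst; field; exact: nz.
  apply: (@lin1 _ (du_dx G) _ hc); rewrite /c; topoly.
by rewrite Lapx_udx Lapx_nu h1 hA1 mulr0 udx_0 scaler0 subr0.
Qed.

Lemma Ex_SuF d e G : Ex G = d *: G -> Ex (SuF e G) = (d - 1) *: SuF e G.
Proof.
move=> hE; rewrite /SuF Ex_B Ex_Z Ex_udx Ex_nu (Ex_A hE) hE udx_Z; topoly.
Qed.
Lemma Eu_SxF d e G : Eu G = e *: G -> Eu (SxF d G) = (e - 1) *: SxF d G.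
Proof.
move=> hE; rewrite /SxF Eu_B Eu_Z Eu_xdu Eu_nx (Eu_A hE) hE xdu_Z; topoly.
Qed.

Lemma CF_harm d e G : harmonic G -> Ex G = d *: G -> Eu G = e *: G ->
  cst d != 0 -> cst e != 0 -> harmonic (CF d e G).
Proof.
move=> hG hEx hEu nzd nze.
have [sx1 sx2] := SxF_harm hG hEx nzd.
have [su1 su2] := SuF_harm hG hEu nze.
have [hA1 hA2] := A_harm hG; case: (hG) => h1 h2.
have exS := Ex_SuF e hEx; have euT := Eu_SxF d hEu.
have exA := Ex_A hEx; have euA := Eu_A hEu.
rewrite /CF.
have eS : SuF e G = u_dx G - (cst e)^-1 *: (nu * du_dx G) by reflexivity.
have eT : SxF d G = x_du G - (cst d)^-1 *: (nx * du_dx G) by reflexivity.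
move: (SuF e G) (SxF d G) eS eT su1 su2 sx1 sx2 exS euT => S T eS eT su1 su2 sx1 sx2 exS euT.
move: (du_dx G) eS eT hA1 hA2 exA euA => A eS eT hA1 hA2 exA euA.
split.
  rewrite 3!LapxBZ -!mulrA.
  rewrite Lapx_ux (Lapx_nx S) (Lapx_nu T) (Lapx_nx (nu * A)) (Lapx_nu A) exS Ex_nu exA.
  rewrite h1 su1 sx1 hA1 !mulr0 !add0r.
  have k1 : 2%:R - (cst d)^-1 * (4%:R * (d - 1) + (2 * m)%:R) = 0.
    rewrite /cst; field; exact: nzd.
  have k2 : (0 : K) = 0 by [].
  apply: (@lin2 _ _ (u_dx G) (nu * A) _ k1 k2); rewrite eS; topoly.
rewrite 3!LapuBZ -!mulrA.
rewrite Lapu_ux (Lapu_nx S) (Lapu_nu T) (Lapu_nx (nu * A)) (Lapu_nu A) euT euA.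
rewrite h2 su2 sx2 hA2 !mulr0 !add0r.
have k1 : 2%:R - (cst e)^-1 * (4%:R * (e - 1) + (2 * m)%:R) = 0.
  rewrite /cst; field; exact: nze.
have k2 : (0 : K) = 0 by [].
apply: (@lin2 _ _ (x_du G) (nx * A) _ k1 k2); rewrite eT; topoly.
Qed.

Lemma sub4K (a b c d : P) : a + b + c + d - a = b + c + d.
Proof. ring. Qed.

Lemma mkDec2 (h00 h10 h01 h11 f : P) : harmonic h00 -> harmonic h10 ->
  harmonic h01 -> harmonic h11 ->
  f = h00 + nx * h10 + nu * h01 + nx * nu * h11 -> Dec2 f.
Proof. by move=> *; exists h00, h10, h01, h11. Qed.

Lemma pis_harm (h : P) : harmonic h -> pis h = h.
Proof.
move=> hh; apply: pis_eq.
- have h0 : harmonic (0 : P) by exact: harm0.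
  apply: (mkDec2 hh h0 h0 h0).
  by rewrite !mulr0 !addr0.
- exact: hh.
- rewrite subrr; exact: inI0.
Qed.

Lemma Dec2_xdu d G : harmonic G -> Ex G = d *: G -> cst d != 0 ->
  x_du G = SxF d G + nx * ((cst d)^-1 *: du_dx G).
Proof. by move=> *; rewrite /SxF; topoly. Qed.

Lemma pis_xdu d G : harmonic G -> Ex G = d *: G -> cst d != 0 ->
  pis (x_du G) = SxF d G.
Proof.
move=> hG hE nz; apply: pis_eq; last first.
- by rewrite (Dec2_xdu hG hE nz) addrC addKr; exact: inI_nx.
- exact: SxF_harm.
apply: (mkDec2 (SxF_harm hG hE nz) (harmZ _ (A_harm hG)) harm0 harm0).
by rewrite (Dec2_xdu hG hE nz) !mulr0 !addr0.
Qed.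

Lemma Dec2_udx e G : harmonic G -> Eu G = e *: G -> cst e != 0 ->
  u_dx G = SuF e G + nu * ((cst e)^-1 *: du_dx G).
Proof. by move=> *; rewrite /SuF; topoly. Qed.

Lemma pis_udx e G : harmonic G -> Eu G = e *: G -> cst e != 0 ->
  pis (u_dx G) = SuF e G.
Proof.
move=> hG hE nz; apply: pis_eq; last first.
- by rewrite (Dec2_udx hG hE nz) addrC addKr; exact: inI_nu.
- exact: SuF_harm.
apply: (mkDec2 (SuF_harm hG hE nz) harm0 (harmZ _ (A_harm hG)) harm0).
by rewrite (Dec2_udx hG hE nz) !mulr0 !addr0.
Qed.

Lemma Dec2_ux d e G :
  uxp * G = CF d e G + nx * ((cst d)^-1 *: SuF e G) + nu * ((cst e)^-1 *: SxF d G)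
            + nx * nu * (((cst d)^-1 * (cst e)^-1) *: du_dx G).
Proof. by rewrite /CF; topoly. Qed.

Lemma pis_ux d e G : harmonic G -> Ex G = d *: G -> Eu G = e *: G ->
  cst d != 0 -> cst e != 0 -> pis (uxp * G) = CF d e G.
Proof.
move=> hG hEx hEu nzd nze; apply: pis_eq; last first.
- rewrite (Dec2_ux d e G) sub4K -mulrA; apply: inID; first apply: inID.
  + exact: inI_nx.
  + exact: inI_nu.
  + exact: inI_nx.
- exact: CF_harm.
apply: (mkDec2 (CF_harm hG hEx hEu nzd nze) (harmZ _ (SuF_harm hG hEu nze))
         (harmZ _ (SxF_harm hG hEx nzd)) (harmZ _ (A_harm hG))).
exact: Dec2_ux.
Qed.

Lemma xdu_split d G : x_du G = SxF d G + nx * ((cst d)^-1 *: du_dx G).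
Proof. by rewrite /SxF; topoly. Qed.
Lemma udx_split e G : u_dx G = SuF e G + nu * ((cst e)^-1 *: du_dx G).
Proof. by rewrite /SuF; topoly. Qed.

Lemma ABZ f c g : du_dx (f - c *: g) = du_dx f - c *: du_dx g.
Proof. by rewrite A_B A_Z. Qed.

Lemma L0_gen G S T A c1 c2 c3 :
  du_dx (uxp * G - c1 *: (nx * S) - c2 *: (nu * T) - c3 *: (nx * nu * A)) =
  uxp * du_dx G + Ex G + Eu G + G *+ m
  - c1 *: (nx * du_dx S + x_du S *+ 2) - c2 *: (nu * du_dx T + u_dx T *+ 2)
  - c3 *: (nx * (nu * du_dx A + u_dx A *+ 2) + (nu * x_du A + uxp * A *+ 2) *+ 2).
Proof.
rewrite 3!ABZ (dudx_ux G) (dudx_nx S) (dudx_nu T) -(mulrA nx nu A).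
by rewrite (dudx_nx (nu * A)) (dudx_nu A) (xdu_nu A).
Qed.

Lemma L0_expand d e G : Ex G = d *: G -> Eu G = e *: G ->
  du_dx (CF d e G) =
  uxp * du_dx G + (d + e + m%:R) *: G
  - (cst d)^-1 *: (nx * du_dx (SuF e G) + x_du (SuF e G) *+ 2)
  - (cst e)^-1 *: (nu * du_dx (SxF d G) + u_dx (SxF d G) *+ 2)
  - ((cst d)^-1 * (cst e)^-1) *:
      (nx * (nu * du_dx (du_dx G) + u_dx (du_dx G) *+ 2)
       + (nu * x_du (du_dx G) + uxp * du_dx G *+ 2) *+ 2).
Proof.
move=> hEx hEu; rewrite /CF L0_gen hEx hEu; congr (_ - _ - _ - _).
by rewrite !scalerDl scaler_nat !addrA.
Qed.

End Work2.

Section Work2.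
Variables (R : realType) (m : nat).
Local Notation K := (Cx R).
Local Notation P := (Pol R m).
Local Notation nx := (normx2 R m).
Local Notation nu := (normu2 R m).
Local Notation uxp := (ux R m).
Local Notation X j := (@xv R m j).
Local Notation U j := (@uv R m j).
Local Notation Ex := (@Ex R m).
Local Notation Eu := (@Eu R m).
Local Notation inI := (@inI R m).
Local Notation Dec2 := (@Dec2 R m).
Implicit Types (G f g : P).
Opaque normx2 normu2 ux.
Local Notation harm0 := (@harm0 R m).
Local Notation cst := (@cst R m).
Local Notation SxF := (@SxF R m).
Local Notation SuF := (@SuF R m).
Local Notation CF := (@CF R m).
Ltac topoly := rewrite ?toP ?(rmorphB, rmorphD, rmorphM, rmorphN, rmorph_nat, rmorph1); ring.

Definition D2 (f h : P) := harmonic h /\ exists h10 h01 h11,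
  [/\ harmonic h10, harmonic h01 & harmonic h11] /\
  f = h + nx * h10 + nu * h01 + nx * nu * h11.

Lemma D2_pis f h : D2 f h -> pis f = h.
Proof.
move=> [hh [h10 [h01 [h11 [[H1 H2 H3] E]]]]]; apply: pis_eq.
- exact: (mkDec2 hh H1 H2 H3 E).
- exact: hh.
rewrite E sub4K -mulrA; apply: inID; first apply: inID.
+ exact: inI_nx.
+ exact: inI_nu.
+ exact: inI_nx.
Qed.

Lemma D2_harm h : harmonic h -> D2 h h.
Proof.
move=> hh; split => //; exists 0, 0, 0; split; first by split; exact: harm0.
by rewrite !mulr0 !addr0.
Qed.
Lemma D2D f h g k : D2 f h -> D2 g k -> D2 (f + g) (h + k).
Proof.
move=> [hh [a [b [c [[Ha Hb Hc] ->]]]]] [hk [a' [b' [c' [[Ha' Hb' Hc'] ->]]]]].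
split; first exact: harmD.
exists (a + a'), (b + b'), (c + c'); split; first by split; exact: harmD.
ring.
Qed.
Lemma D2Z c f h : D2 f h -> D2 (c *: f) (c *: h).
Proof.
move=> [hh [a [b [c' [[Ha Hb Hc] ->]]]]].
split; first exact: harmZ.
exists (c *: a), (c *: b), (c *: c'); split; first by split; exact: harmZ.
by rewrite !scalerDr !scalerAr.
Qed.
Lemma D2N f h : D2 f h -> D2 (- f) (- h).
Proof. by move=> hf; rewrite -[- f]scaleN1r -[- h]scaleN1r; apply: D2Z. Qed.
Lemma D2B f h g k : D2 f h -> D2 g k -> D2 (f - g) (h - k).
Proof. by move=> hf hg; apply: D2D => //; apply: D2N. Qed.
Lemma D2Mn f h n : D2 f h -> D2 (f *+ n) (h *+ n).
Proof. by move=> hf; rewrite -[f *+ n]scaler_nat -[h *+ n]scaler_nat; apply: D2Z. Qed.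
Lemma D2_eq f h h' : D2 f h -> h = h' -> D2 f h'.
Proof. by move=> ? <-. Qed.

Lemma D2_nx g : harmonic g -> D2 (nx * g) 0.
Proof.
move=> hg; split; first exact: harm0.
exists g, 0, 0; split; first by split; [exact: hg | exact: harm0 | exact: harm0].
ring.
Qed.
Lemma D2_nu g : harmonic g -> D2 (nu * g) 0.
Proof.
move=> hg; split; first exact: harm0.
exists 0, g, 0; split; first by split; [exact: harm0 | exact: hg | exact: harm0].
ring.
Qed.
Lemma D2_nxnu g : harmonic g -> D2 (nx * (nu * g)) 0.
Proof.
move=> hg; split; first exact: harm0.
exists 0, 0, g; split; first by split; [exact: harm0 | exact: harm0 | exact: hg].
ring.
Qed.

Lemma D2_xdu d G : harmonic G -> Ex G = d *: G -> cst d != 0 ->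
  D2 (x_du G) (SxF d G).
Proof.
move=> hG hE nz; split; first exact: SxF_harm.
exists ((cst d)^-1 *: du_dx G), 0, 0; split.
  by split; [exact: (harmZ _ (A_harm hG)) | exact: harm0 | exact: harm0].
by rewrite (xdu_split d G) !mulr0 !addr0.
Qed.
Lemma D2_udx e G : harmonic G -> Eu G = e *: G -> cst e != 0 ->
  D2 (u_dx G) (SuF e G).
Proof.
move=> hG hE nz; split; first exact: SuF_harm.
exists 0, ((cst e)^-1 *: du_dx G), 0; split.
  by split; [exact: harm0 | exact: (harmZ _ (A_harm hG)) | exact: harm0].
by rewrite (udx_split e G) !mulr0 !addr0.
Qed.
Lemma D2_ux d e G : harmonic G -> Ex G = d *: G -> Eu G = e *: G ->
  cst d != 0 -> cst e != 0 -> D2 (uxp * G) (CF d e G).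
Proof.
move=> hG hEx hEu nzd nze; split; first exact: CF_harm.
exists ((cst d)^-1 *: SuF e G), ((cst e)^-1 *: SxF d G),
       (((cst d)^-1 * (cst e)^-1) *: du_dx G); split; last exact: Dec2_ux.
by split; apply: harmZ; [exact: SuF_harm | exact: SxF_harm | exact: A_harm].
Qed.
Lemma D2_nx_udx e G : harmonic G -> Eu G = e *: G -> cst e != 0 ->
  D2 (nx * u_dx G) 0.
Proof.
move=> hG hE nz; rewrite (udx_split e G) mulrDr -[0]addr0.
apply: D2D; first exact: (D2_nx (SuF_harm hG hE nz)).
exact: (D2_nxnu (harmZ _ (A_harm hG))).
Qed.
Lemma D2_nu_xdu d G : harmonic G -> Ex G = d *: G -> cst d != 0 ->
  D2 (nu * x_du G) 0.
Proof.
move=> hG hE nz; rewrite (xdu_split d G) mulrDr -[0]addr0 [nu * (nx * _)]mulrCA.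
apply: D2D; first exact: (D2_nu (SxF_harm hG hE nz)).
exact: (D2_nxnu (harmZ _ (A_harm hG))).
Qed.

Section Main.
Variables (d e : K) (H : P).
Hypotheses (hH : harmonic H) (hEx : Ex H = d *: H) (hEu : Eu H = e *: H).
Hypotheses (nzd : cst d != 0) (nze : cst e != 0)
           (nzd1 : cst (d - 1) != 0) (nze1 : cst (e - 1) != 0).

Local Notation a := (du_dx H).
Local Notation s := (SuF e H).
Local Notation t := (SxF d H).
Local Notation al := ((cst d)^-1).
Local Notation be := ((cst e)^-1).
Local Notation al' := ((cst (d - 1))^-1).
Local Notation be' := ((cst (e - 1))^-1).

Let ha : harmonic a := A_harm hH.
Let hs : harmonic s := SuF_harm hH hEu nze.
Let ht : harmonic t := SxF_harm hH hEx nzd.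
Let hExa : Ex a = (d - 1) *: a := Ex_A hEx.
Let hEua : Eu a = (e - 1) *: a := Eu_A hEu.
Let hExs : Ex s = (d - 1) *: s := Ex_SuF e hEx.
Let hEut : Eu t = (e - 1) *: t := Eu_SxF d hEu.

Lemma main_gen :
  Aop (Cop H) = (1 - 4%:R * (al * be)) *: Cop (Aop H) + (d + e + m%:R) *: H
  - (2%:R * al) *: Sx (Su H) - (2%:R * be) *: Su (Sx H).
Proof.
have Aa : Aop H = a := pis_harm ha.
have Ca : Cop a = CF (d - 1) (e - 1) a := pis_ux ha hExa hEua nzd1 nze1.
have SuH : Su H = s := pis_udx hH hEu nze.
have SxH : Sx H = t := pis_xdu hH hEx nzd.
have SxSu : Sx s = SxF (d - 1) s := pis_xdu hs hExs nzd1.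
have SuSx : Su t = SuF (e - 1) t := pis_udx ht hEut nze1.
have CH : Cop H = CF d e H := pis_ux hH hEx hEu nzd nze.
rewrite Aa Ca SuH SxH SxSu SuSx CH /Aop (L0_expand hEx hEu).
have D1 : D2 (uxp * a) (CF (d - 1) (e - 1) a) := D2_ux ha hExa hEua nzd1 nze1.
have Dxs : D2 (nx * du_dx s + x_du s *+ 2) (SxF (d - 1) s *+ 2).
  apply: D2_eq; first exact: (D2D (D2_nx (A_harm hs)) (D2Mn 2 (D2_xdu hs hExs nzd1))).
  by rewrite add0r.
have Dut : D2 (nu * du_dx t + u_dx t *+ 2) (SuF (e - 1) t *+ 2).
  apply: D2_eq; first exact: (D2D (D2_nu (A_harm ht)) (D2Mn 2 (D2_udx ht hEut nze1))).
  by rewrite add0r.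
have Da : D2 (nx * (nu * du_dx a + u_dx a *+ 2) + (nu * x_du a + uxp * a *+ 2) *+ 2)
             (CF (d - 1) (e - 1) a *+ 4).
  apply: D2_eq.
    rewrite mulrDr mulrnAr.
    exact: (D2D (D2D (D2_nxnu (A_harm ha)) (D2Mn 2 (D2_nx_udx ha hEua nze1)))
                (D2Mn 2 (D2D (D2_nu_xdu ha hExa nzd1) (D2Mn 2 D1)))).
  by rewrite mul0rn !add0r -mulrnA.
have DL := D2B (D2B (D2B (D2D D1 (D2Z (d + e + m%:R) (D2_harm hH)))
                  (D2Z al Dxs)) (D2Z be Dut)) (D2Z (al * be) Da).
rewrite (D2_pis DL); topoly.
Qed.
End Main.
End Work2.

Lemma natsub_neq0 (R : realType) (n k : nat) : (k < n)%N -> ((n%:R - k%:R : complex R) != 0).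
Proof.
move=> lt; rewrite -natrB; last exact: ltnW.
by rewrite pnatr_eq0 subn_eq0 -ltnNge.
Qed.

Theorem lemma3p5 (R : realType) (m : nat) (hm : (4 < m)%N)
  (p q : nat) (H : Pol R m) :
  bihomog p q H -> harmonic H ->
  let hx := eigHx R m p in
  let hu := eigHu R m q in
  Aop (Cop H) =
    ((hx + hx * hu + hu) / ((hx + 1) * (hu + 1))) *: Cop (Aop H)
    - (hx + hu) *: H
    + (hx + 1)^-1 *: Sx (Su H)
    + (hu + 1)^-1 *: Su (Sx H).
Proof.
move=> hb hh; cbv zeta.
have hEx := Ex_bihomog hb; have hEu := Eu_bihomog hb.
have cd : @cst R m p%:R = (m + 2 * p)%N%:R - 2%:R by rewrite /cst natrD natrM.
have ce : @cst R m q%:R = (m + 2 * q)%N%:R - 2%:R by rewrite /cst natrD natrM.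
have cd1 : @cst R m (p%:R - 1) = (m + 2 * p)%N%:R - 4%:R.
  by rewrite /cst natrD natrM; ring.
have ce1 : @cst R m (q%:R - 1) = (m + 2 * q)%N%:R - 4%:R.
  by rewrite /cst natrD natrM; ring.
have l2 : forall x, (2 < m + 2 * x)%N by move=> x; apply: leq_trans (leq_addr _ _); apply: ltn_trans hm.
have l4 : forall x, (4 < m + 2 * x)%N by move=> x; apply: leq_trans hm (leq_addr _ _).
have nzd : @cst R m p%:R != 0 by rewrite cd; exact: natsub_neq0.
have nze : @cst R m q%:R != 0 by rewrite ce; exact: natsub_neq0.
have nzd1 : @cst R m (p%:R - 1) != 0 by rewrite cd1; exact: natsub_neq0.
have nze1 : @cst R m (q%:R - 1) != 0 by rewrite ce1; exact: natsub_neq0.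
rewrite (main_gen hh hEx hEu nzd nze nzd1 nze1).
have two : (2%:R : Cx R) != 0 by rewrite pnatr_eq0.
have Ex' : eigHx R m p = - @cst R m p%:R / 2%:R - 1.
  by rewrite /eigHx /cst; field.
have Eu' : eigHu R m q = - @cst R m q%:R / 2%:R - 1.
  by rewrite /eigHu /cst; field.
have E2 : eigHx R m p + eigHu R m q = - (p%:R + q%:R + m%:R).
  by rewrite /eigHx /eigHu; field.
rewrite E2 Ex' Eu'.
set c1 := @cst R m p%:R; set c2 := @cst R m q%:R.
have E1 : (- c1 / 2%:R - 1 + (- c1 / 2%:R - 1) * (- c2 / 2%:R - 1) + (- c2 / 2%:R - 1)) /
          ((- c1 / 2%:R - 1 + 1) * (- c2 / 2%:R - 1 + 1)) = 1 - 4%:R * (c1^-1 * c2^-1).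
  by field; rewrite !subrK !oppr_eq0 /c1 /c2 nzd nze.
have E3 : (- c1 / 2%:R - 1 + 1)^-1 = - (2%:R * c1^-1).
  by field; rewrite ?subrK ?oppr_eq0 /c1 ?nzd.
have E4 : (- c2 / 2%:R - 1 + 1)^-1 = - (2%:R * c2^-1).
  by field; rewrite ?subrK ?oppr_eq0 /c2 ?nze.
rewrite E1 E3 E4 ?toP ?(rmorphB, rmorphD, rmorphM, rmorphN, rmorph_nat, rmorph1); ring.
Qed.
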